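(* Let $\Gamma$ be a $(d+1)$-vertex-connected graph with at least $d+1$ vertices, and let $(q,\Gamma)$ be a framework in $\mathbb{R}^d$ with the convex containment property. Then there is a non-symmetric equilibrium stress matrix $\Omega$ of $(q,\Gamma)$ with co-rank $d+1$ (i.e., $\dim\ker\Omega=d+1$).
   Context: A framework $(q,\Gamma)$ in $\mathbb{R}^d$ has the convex containment property if (1) for each vertex, the positions of its neighbors have affine span of dimension $d$, and (2) there is a set of $d+1$ exceptional vertices such that every other vertex $i$ has $q(i)$ in the interior of the convex hull of the positions of its neighbors. A non-symmetric equilibrium stress matrix of $(q,\Gamma)$ is a real matrix $\Omega$ indexed by $V\times V$ with $\Omega(u,w)=0$ whenever $u\ne w$ and $\{u,w\}$ is not an edge, $\sum_w\Omega(u,w)=0$ for all $u$, and $\sum_w\Omega(u,w)q(w)=0$ for all $u$. *)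

(* Defs.v *)
From HB Require Import structures.
From mathcomp Require Import all_boot all_order all_algebra.
From mathcomp Require Import reals.
Set Implicit Arguments. Unset Strict Implicit. Unset Printing Implicit Defensive.
Import Order.TTheory GRing.Theory Num.Theory.
Local Open Scope ring_scope.

Definition simple_graph (n : nat) (G : rel 'I_n) : Prop :=
  irreflexive G /\ symmetric G.

Definition vertex_connected (n k : nat) (G : rel 'I_n) : Prop :=
  forall S : {set 'I_n}, (#|S| < k)%N ->
    forall u v, u \notin S -> v \notin S ->
      connect [rel x y | [&& G x y, x \notin S & y \notin S]] u v.

(* Its rank is 1 + dim of the affine
   span of the neighbours' positions (with dim of the empty set = -1). *)
Definition nbr_homog (R : realType) (n d : nat) (G : rel 'I_n)
    (q : 'I_n -> 'rV[R]_d) (i : 'I_n) : 'M[R]_(n, d + 1) :=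
  \matrix_(w < n) (if G i w then row_mx (q w) (1 : 'rV[R]_1) else 0).

Definition nbrs_affinely_spanning (R : realType) (n d : nat) (G : rel 'I_n)
    (q : 'I_n -> 'rV[R]_d) (i : 'I_n) : Prop :=
  \rank (nbr_homog G q i) = d.+1.

Definition in_nbr_hull (R : realType) (n d : nat) (G : rel 'I_n)
    (q : 'I_n -> 'rV[R]_d) (i : 'I_n) (y : 'rV[R]_d) : Prop :=
  exists lam : 'I_n -> R,
    [/\ forall w, 0 <= lam w,
        forall w, ~~ G i w -> lam w = 0,
        \sum_w lam w = 1 &
        y = \sum_w lam w *: q w].

Definition in_nbr_hull_interior (R : realType) (n d : nat) (G : rel 'I_n)
    (q : 'I_n -> 'rV[R]_d) (i : 'I_n) (x : 'rV[R]_d) : Prop :=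
  exists2 e : R, 0 < e &
    forall y : 'rV[R]_d, (forall j, `|y 0 j - x 0 j| < e) -> in_nbr_hull G q i y.

Definition convex_containment (R : realType) (n d : nat) (G : rel 'I_n)
    (q : 'I_n -> 'rV[R]_d) : Prop :=
  (forall i, nbrs_affinely_spanning G q i) /\
  exists X : {set 'I_n}, #|X| = d.+1 /\
    forall i, i \notin X -> in_nbr_hull_interior G q i (q i).

Definition nonsym_equilibrium_stress (R : realType) (n d : nat) (G : rel 'I_n)
    (q : 'I_n -> 'rV[R]_d) (Om : 'M[R]_n) : Prop :=
  [/\ forall u w, u != w -> ~~ G u w -> Om u w = 0,
      forall u, \sum_w Om u w = 0 &
      forall u, \sum_w Om u w *: q w = 0].

(* Main.v *)
Require Import Defs.
From HB Require Import structures.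
From mathcomp Require Import all_boot all_order all_algebra.
From mathcomp Require Import reals.
From Stdlib Require Import ClassicalEpsilon.
Import Order.TTheory GRing.Theory Num.Theory.
Local Open Scope ring_scope.
Lemma path_prop (T : finType) (e : rel T) (P : T -> bool) :
  (forall y z, P y -> e y z -> P z) ->
  forall p x, P x -> path e x p -> P (last x p).
Proof.
move=> st; elim=> [|a p IH] x Px //=.
case/andP=> exa pa; apply: IH pa; exact: st Px exa.
Qed.

Lemma keylemma (R : realType) n (G : rel 'I_n) (X : {set 'I_n})
  (lam : 'I_n -> 'I_n -> R) (v : 'I_n -> R) x0 :
 x0 \in X ->
 (forall u w, connect G u w) ->
 (forall i, i \notin X -> forall j, 0 <= lam i j) ->
 (forall i, i \notin X -> \sum_j lam i j = 1) ->
 (forall i j, i \notin X -> G i j -> 0 < lam i j) ->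
 (forall x, x \in X -> v x = 0) ->
 (forall i, i \notin X -> v i = \sum_j lam i j * v j) ->
 forall i, v i = 0.
Proof.
move=> x0X conn Hpos Hsum Hlt Hv0 Hrec.
have [i0 Hmax] : exists i0, forall j, `|v j| <= `|v i0|.
  case: (@arg_maxP _ _ 'I_n x0 xpredT (fun j => `|v j|) isT) => i0 _ H.
  by exists i0 => j; apply: H.
set m := `|v i0|.
suff m0 : m = 0.
  by move=> i; apply/eqP; rewrite -normr_le0 -m0 Hmax.
have st : forall y z, (m == 0) || (`|v y| == m) -> G y z -> (m == 0) || (`|v z| == m).
  move=> y z; case/orP => [->//|/eqP Hy] Gyz.
  case: (boolP (y \in X)) => yX.
    by rewrite -Hy (Hv0 y yX) normr0 eqxx.
  apply/orP; right.
  have h1 : m <= \sum_j lam y j * `|v j|.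
    rewrite -Hy (Hrec y yX); apply: (le_trans (ler_norm_sum _ _ _)).
    by apply: ler_sum => j _; rewrite normrM ger0_norm ?Hpos.
  have h2 : \sum_j lam y j * `|v j| <= m.
    rewrite -[X in _ <= X]mul1r -(Hsum y yX) mulr_suml.
    by apply: ler_sum => j _; rewrite ler_wpM2l ?Hpos.
  have Hs : \sum_j lam y j * (m - `|v j|) = 0.
    under eq_bigr do rewrite mulrBr.
    rewrite sumrB -mulr_suml Hsum // mul1r.
    apply/eqP; rewrite subr_eq0 eq_le h2 h1 //.
  have Hz : lam y z * (m - `|v z|) = 0.
    apply: (psumr_eq0P _ Hs) => // j _.
    by rewrite mulr_ge0 ?Hpos // subr_ge0.
  rewrite eq_sym -subr_eq0; apply/eqP.
  move/eqP: Hz; rewrite mulf_eq0 => /orP [|/eqP //].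
  by rewrite (gt_eqF (Hlt y z yX Gyz)).
have := conn i0 x0; case/connectP => p pth Hx.
have := @path_prop _ _ (fun y => (m == 0) || (`|v y| == m)) st _ _ _ pth; rewrite eqxx orbT -Hx => /(_ isT) /orP [/eqP //|].
by rewrite Hv0 // normr0 => /eqP.
Qed.

Section Dsum.
Variable (R : fieldType) (n : nat).
Definition Dsum (A : {set 'I_n}) : 'M[R]_n := \sum_(j in A) delta_mx j j.

Lemma DsumE A a b : Dsum A a b = ((a == b) && (a \in A))%:R.
Proof.
rewrite /Dsum summxE; under eq_bigr do rewrite mxE.
case: (boolP (a \in A)) => aA.
  rewrite (bigD1 a) //= eqxx /= big1 ?addr0 ?andbT; first by rewrite eq_sym.
  by move=> j /andP[_ /negbTE ja]; rewrite eq_sym ja.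
rewrite andbF big1 // => j jA; case: eqP => // aj; subst j.
by rewrite jA in aA.
Qed.

Lemma Dsum_mull A (M : 'M[R]_n) a b : (Dsum A *m M) a b = (a \in A)%:R * M a b.
Proof.
rewrite mxE (bigD1 a) //= DsumE eqxx /= big1 ?addr0 // => k /negbTE ak.
by rewrite DsumE eq_sym ak mul0r.
Qed.

Lemma Dsum_mulr A (M : 'M[R]_n) a b : (M *m Dsum A) a b = M a b * (b \in A)%:R.
Proof.
rewrite mxE (bigD1 b) //= DsumE eqxx /= big1 ?addr0 // => k /negbTE ak.
by rewrite DsumE ak mulr0.
Qed.

Lemma rank_Dsum A : (\rank (Dsum A) <= #|A|)%N.
Proof.
rewrite /Dsum -sum1_card.
apply: (big_ind2 (fun (M : 'M[R]_n) k => (\rank M <= k)%N)).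
- by rewrite mxrank0.
- move=> M1 k1 M2 k2 h1 h2.
  exact: leq_trans (mxrank_add _ _) (leq_add h1 h2).
- by move=> j _; rewrite mxrank_delta.
Qed.
End Dsum.
From mathcomp Require Import ring lra zify.
Lemma pos_weights (R : realType) n d (G : rel 'I_n) (q : 'I_n -> 'rV[R]_d) i :
  nbrs_affinely_spanning G q i -> in_nbr_hull_interior G q i (q i) ->
  exists lam : 'I_n -> R, [/\ forall w, 0 <= lam w, forall w, ~~ G i w -> lam w = 0,
     forall w, G i w -> 0 < lam w, \sum_w lam w = 1 & q i = \sum_w lam w *: q w].
Proof.
move=> Hsp [e e0 He].
have [w0 Gw0] : exists w, G i w.
  apply/existsP; apply: contraT => /existsPn H.
  move: Hsp; rewrite /nbrs_affinely_spanning.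
  have -> : nbr_homog G q i = 0.
    by apply/matrixP => a b; rewrite !mxE (negbTE (H a)) mxE.
  by rewrite mxrank0.
set kr : R := (#|[set w | G i w]|)%:R.
have kr0 : 0 < kr.
  rewrite /kr ltr0n; apply/card_gt0P; exists w0; by rewrite inE.
have Hk : \sum_w ((G i w)%:R : R) = kr.
  rewrite /kr -sum1_card natr_sum [RHS]big_mkcond; apply: eq_bigr => w _.
  by rewrite inE; case: (G i w).
set b := kr^-1 *: \sum_(w | G i w) q w.
set c := q i - b.
set M := \sum_j `|c 0 j|.
have M0 : 0 <= M by apply: sumr_ge0.
set eps := e / (M + 1).
have eps0 : 0 < eps by apply: divr_gt0 => //; lra.
have epsM : eps * (M + 1) = e by rewrite /eps divfK //; apply/negbT/gt_eqF; lra.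
set y := q i + eps *: c.
have Hy : in_nbr_hull G q i y.
  apply: He => j.
  have -> : y 0 j - q i 0 j = eps * c 0 j by rewrite !mxE; ring.
  rewrite normrM (gtr0_norm eps0).
  have cj : `|c 0 j| <= M.
    by rewrite /M (bigD1 j) //= lerDl sumr_ge0.
  have : eps * `|c 0 j| <= eps * M by rewrite ler_wpM2l // ltW.
  nra.
case: Hy => mu [mu0 muG musum muy].
have E1 : \sum_w (mu w + eps * kr^-1 * (G i w)%:R) *: q w = (1 + eps) *: q i.
  under eq_bigr do rewrite scalerDl.
  rewrite big_split /= -muy.
  have E2 : \sum_w (eps * kr^-1 * (G i w)%:R) *: q w = eps *: b.
    rewrite /b scalerA; under eq_bigr do rewrite -scalerA.
    rewrite -scaler_sumr; congr (_ *: _).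
    rewrite [RHS]big_mkcond; apply: eq_bigr => w _.
    by case: (G i w); rewrite ?scale1r ?scale0r.
  rewrite E2 /y /c scalerBr scalerDl scale1r addrA subrK //.
exists (fun w => (mu w + eps * kr^-1 * (G i w)%:R) / (1 + eps)).
split.
- move=> w; apply: divr_ge0; last lra.
  apply: addr_ge0 => //; apply: mulr_ge0; last by case: (G i w).
  by apply: mulr_ge0; [lra | rewrite invr_ge0 ltW].
- by move=> w /negbTE Gw; rewrite muG ?Gw // mulr0 addr0 mul0r.
- move=> w Gw; rewrite Gw mulr1; apply: divr_gt0; last lra.
  apply: ltr_wpDl => //; apply: mulr_gt0 => //; by rewrite invr_gt0.
- rewrite -mulr_suml big_split /= musum -mulr_sumr Hk mulfVK; last first.
    by apply/negbT/gt_eqF.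
  by rewrite mulfV //; apply/negbT/gt_eqF; lra.
- under eq_bigr do rewrite mulrC -scalerA.
  rewrite -scaler_sumr E1 scalerA mulVf ?scale1r //.
  by apply/negbT/gt_eqF; lra.
Qed.
Theorem lemma5p8 (R : realType) (n d : nat) (G : rel 'I_n)
    (q : 'I_n -> 'rV[R]_d) :
  simple_graph G ->
  vertex_connected d.+1 G ->
  (d.+1 <= n)%N ->
  convex_containment G q ->
  exists Om : 'M[R]_n,
    nonsym_equilibrium_stress G q Om /\ (n - \rank Om)%N = d.+1.
Proof.
move=> [Girr Gsym] conn dn [Hspan [X [cardX Hint]]].
have [x0 x0X] : exists x0, x0 \in X.
  by apply/card_gt0P; rewrite cardX.
have conn' : forall u w, connect G u w.
  move=> u w.
  have H0 : (#|(set0 : {set 'I_n})| < d.+1)%N by rewrite cards0.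
  have := conn set0 H0 u w (negbT (in_set0 u)) (negbT (in_set0 w)).
  apply: connect_sub => x y /= /andP[Gxy _]; exact: connect1.
have Hch : forall i, exists lam : 'I_n -> R, i \notin X ->
  [/\ forall w, 0 <= lam w, forall w, ~~ G i w -> lam w = 0,
     forall w, G i w -> 0 < lam w, \sum_w lam w = 1 & q i = \sum_w lam w *: q w].
  move=> i; case: (boolP (i \in X)) => iX.
    by exists (fun _ => 0).
  have [lam Hl] := @pos_weights R n d G q i (Hspan i) (Hint i iX).
  by exists lam.
pose lam i := proj1_sig (constructive_indefinite_description _ (Hch i)).
have Hlam : forall i, i \notin X ->
  [/\ forall w, 0 <= lam i w, forall w, ~~ G i w -> lam i w = 0,
     forall w, G i w -> 0 < lam i w, \sum_w lam i w = 1 & q i = \sum_w lam i w *: q w].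
  move=> i; exact: (proj2_sig (constructive_indefinite_description _ (Hch i))).
pose Om : 'M[R]_n := \matrix_(i, j) (if i \in X then 0 else lam i j - (i == j)%:R).
have sumdelta : forall u : 'I_n, \sum_w ((u == w)%:R : R) = 1.
  move=> u; rewrite (bigD1 u) //= eqxx big1 ?addr0 // => w /negbTE.
  by rewrite eq_sym => ->.
have sumdeltaq : forall u : 'I_n, \sum_w ((u == w)%:R : R) *: q w = q u.
  move=> u; rewrite (bigD1 u) //= eqxx scale1r big1 ?addr0 // => w /negbTE.
  by rewrite eq_sym => ->; rewrite scale0r.
exists Om; split.
  split.
  - move=> u w uw Guw; rewrite mxE; case: ifP => // /negbT uX.
    have [_ H _ _ _] := Hlam u uX.
    by rewrite H // (negbTE uw) subr0.
  - move=> u; case: (boolP (u \in X)) => uX.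
      by rewrite big1 // => w _; rewrite mxE uX.
    under eq_bigr do rewrite mxE (negbTE uX).
    have [_ _ _ H _] := Hlam u uX.
    by rewrite sumrB H sumdelta subrr.
  - move=> u; case: (boolP (u \in X)) => uX.
      by rewrite big1 // => w _; rewrite mxE uX scale0r.
    under eq_bigr do rewrite mxE (negbTE uX) scalerBl.
    have [_ _ _ _ H] := Hlam u uX.
    by rewrite sumrB -H sumdeltaq subrr.
pose D := @Dsum R n (~: X).
pose E := @Dsum R n X.
have up : (\rank Om <= n - d.+1)%N.
  have -> : Om = D *m Om.
    apply/matrixP => a b; rewrite Dsum_mull inE.
    case: (boolP (a \in X)) => aX /=; last by rewrite mul1r.
    by rewrite mul0r mxE aX.
  apply: leq_trans (mxrankM_maxl _ _) _.
  apply: leq_trans (rank_Dsum _ _ _) _.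
  have := cardsC X; rewrite cardX card_ord; lia.
pose B := Om *m D + E.
have rB : \rank B = n.
  rewrite -mxrank_tr; apply/eqP; change (row_free B^T); rewrite -kermx_eq0.
  apply/eqP/row_matrixP => i; rewrite row0.
  set v := row i (kermx B^T).
  have hv : v *m B^T = 0 by apply/sub_kermxP; exact: row_sub.
  have hva : forall a, \sum_j v 0 j * B a j = 0.
    move=> a; have := hv; move/matrixP => /(_ 0 a); rewrite !mxE => H.
    apply: (etrans _ H); apply: eq_bigr => j _; by rewrite [B^T j a]mxE.
  have BE : forall a j, B a j = Om a j * (j \notin X)%:R + ((a == j) && (a \in X))%:R.
    by move=> a j; rewrite mxE Dsum_mulr /E DsumE inE.
  have hv0 : forall x, x \in X -> v 0 x = 0.
    move=> x xX; rewrite -(hva x); under eq_bigr do rewrite BE [Om x _]mxE xX /= mul0r add0r.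
    under eq_bigr do rewrite andbT.
    rewrite (bigD1 x) //= eqxx mulr1 big1 ?addr0 // => j /negbTE jx.
    by rewrite eq_sym jx mulr0.
  have hvX : forall j, v 0 j * (j \notin X)%:R = v 0 j.
    move=> j; case: (boolP (j \in X)) => jX /=; last by rewrite mulr1.
    by rewrite mulr0 hv0.
  suff K : forall j, v 0 j = 0 by apply/rowP => j; rewrite K [RHS]mxE.
  apply: (@keylemma R n G X lam (fun j => v 0 j) x0) => //.
  - by move=> a aX w; have [H _ _ _ _] := Hlam a aX.
  - by move=> a aX; have [_ _ _ H _] := Hlam a aX.
  - by move=> a w aX; have [_ _ H _ _] := Hlam a aX; apply: H.
  - move=> a aX; apply/eqP; rewrite eq_sym -subr_eq0; apply/eqP.
    have va : v 0 a = \sum_w ((a == w)%:R * v 0 w).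
      rewrite (bigD1 a) //= eqxx mul1r big1 ?addr0 // => w /negbTE.
      by rewrite eq_sym => ->; rewrite mul0r.
    apply: (etrans _ (hva a)); rewrite [v 0 a]va -sumrB; apply: eq_bigr => w _.
    rewrite BE [Om a w]mxE (negbTE aX) andbF addr0 mulrCA hvX; ring.
have low : (n <= \rank Om + d.+1)%N.
  rewrite -{1}rB; apply: leq_trans (mxrank_add _ _) _.
  apply: leq_add; first exact: mxrankM_maxl.
  by rewrite -cardX; exact: rank_Dsum.

lia.
Qed.
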